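(* For any $\sigma\in\mathcal K$ and $\beta\in\mathcal{KL}$ there exist $\hat\rho\in\mathcal K$ and $\hat\beta\in\mathcal{KL}$ such that $\min\{\sigma(s),\beta(r,t)\}\le\hat\beta\big(s,\ \tfrac{t}{1+\hat\rho(r)}\big)$ for all $t,r,s\ge0$.
   Context: Class $\mathcal K$: continuous strictly increasing $\sigma:\mathbb R_{\ge0}\to\mathbb R_{\ge0}$ with $\sigma(0)=0$. Class $\mathcal{KL}$: continuous $\beta:\mathbb R_{\ge0}\times\mathbb R_{\ge0}\to\mathbb R_{\ge0}$ such that $\beta(\cdot,t)\in\mathcal K$ for each $t\ge0$ and, for each $s\ge0$, $\beta(s,t)$ decreases to $0$ as $t\to\infty$. *)

(* Defs.v *)
(* concrete reals R. Functions on R_{>=0} are modelled as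
   functions R -> R whose behaviour is only constrained on [0, +oo). *)
From Stdlib Require Import Reals.
Open Scope R_scope.

Definition cont_nonneg (f : R -> R) : Prop :=
  forall x, 0 <= x -> forall eps, 0 < eps -> exists delta, 0 < delta /\
    forall y, 0 <= y -> Rabs (y - x) < delta -> Rabs (f y - f x) < eps.

Definition cont2_nonneg (g : R -> R -> R) : Prop :=
  forall x t, 0 <= x -> 0 <= t -> forall eps, 0 < eps -> exists delta, 0 < delta /\
    forall y u, 0 <= y -> 0 <= u -> Rabs (y - x) < delta -> Rabs (u - t) < delta ->
      Rabs (g y u - g x t) < eps.

Definition classK (sigma : R -> R) : Prop :=
  cont_nonneg sigma /\
  (forall x, 0 <= x -> 0 <= sigma x) /\
  (forall x y, 0 <= x -> x < y -> sigma x < sigma y) /\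
  sigma 0 = 0.

Definition classKL (beta : R -> R -> R) : Prop :=
  cont2_nonneg beta /\
  (forall s t, 0 <= s -> 0 <= t -> 0 <= beta s t) /\
  (forall t, 0 <= t -> classK (fun s => beta s t)) /\
  (forall s, 0 <= s ->
     (forall t1 t2, 0 <= t1 -> t1 <= t2 -> beta s t2 <= beta s t1) /\
     (forall eps, 0 < eps -> exists T, 0 <= T /\
        forall t, T <= t -> beta s t < eps)).

(* Main.v *)
Require Import Defs.
From Stdlib Require Import Reals Lra Lia ZArith IndefiniteDescription.
Open Scope R_scope.

Ltac rabs_split := repeat match goal with
  | |- context [Rabs ?x] => unfold Rabs at 1; destruct (Rcase_abs x)
  | H : context [Rabs ?x] |- _ => unfold Rabs at 1 in H; destruct (Rcase_abs x)
  end.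
Ltac rmm_split := unfold Rmax, Rmin in *; repeat match goal with
  | |- context [Rle_dec ?a ?b] => destruct (Rle_dec a b)
  | H : context [Rle_dec ?a ?b] |- _ => destruct (Rle_dec a b)
  end.

Lemma lip_plus a b a' b' : Rabs ((a + b) - (a' + b')) <= Rabs (a - a') + Rabs (b - b').
Proof. rabs_split; lra. Qed.
Lemma lip_minus a b a' b' : Rabs ((a - b) - (a' - b')) <= Rabs (a - a') + Rabs (b - b').
Proof. rabs_split; lra. Qed.
Lemma lip_min a b a' b' : Rabs (Rmin a b - Rmin a' b') <= Rabs (a - a') + Rabs (b - b').
Proof. rmm_split; rabs_split; lra. Qed.
Lemma lip_max a b a' b' : Rabs (Rmax a b - Rmax a' b') <= Rabs (a - a') + Rabs (b - b').
Proof. rmm_split; rabs_split; lra. Qed.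

Lemma c2_op (op : R -> R -> R) f g :
  (forall a b a' b', Rabs (op a b - op a' b') <= Rabs (a - a') + Rabs (b - b')) ->
  cont2_nonneg f -> cont2_nonneg g -> cont2_nonneg (fun s t => op (f s t) (g s t)).
Proof.
  intros Hop Hf Hg x t hx ht eps heps.
  destruct (Hf x t hx ht (eps/2)) as [d1 [hd1 H1]]; [lra|].
  destruct (Hg x t hx ht (eps/2)) as [d2 [hd2 H2]]; [lra|].
  exists (Rmin d1 d2); split; [apply Rmin_pos; lra|].
  intros y u hy hu hyx hut.
  assert (Rabs (y - x) < d1 /\ Rabs (y - x) < d2) as [? ?] by (rmm_split; lra).
  assert (Rabs (u - t) < d1 /\ Rabs (u - t) < d2) as [? ?] by (rmm_split; lra).
  specialize (H1 y u hy hu ltac:(assumption) ltac:(assumption)).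
  specialize (H2 y u hy hu ltac:(assumption) ltac:(assumption)).
  specialize (Hop (f y u) (g y u) (f x t) (g x t)). lra.
Qed.

Lemma c2_fst f : cont_nonneg f -> cont2_nonneg (fun s t => f s).
Proof.
  intros Hf x t hx ht eps heps. destruct (Hf x hx eps heps) as [d [hd H]].
  exists d; split; [lra|]. intros; apply H; auto.
Qed.
Lemma c2_snd f : cont_nonneg f -> cont2_nonneg (fun s t => f t).
Proof.
  intros Hf x t hx ht eps heps. destruct (Hf t ht eps heps) as [d [hd H]].
  exists d; split; [lra|]. intros; apply H; auto.
Qed.
Lemma c2_const c : cont2_nonneg (fun s t => c).
Proof.
  intros x t hx ht eps heps. exists 1; split; [lra|]. intros.
  replace (c - c) with 0 by ring. rewrite Rabs_R0; lra.
Qed.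
Lemma cont_lip f : (forall x y, Rabs (f y - f x) <= Rabs (y - x)) -> cont_nonneg f.
Proof.
  intros Hf x hx eps heps. exists eps; split; [lra|]. intros y hy h.
  specialize (Hf x y); lra.
Qed.
Lemma c2_first g t : cont2_nonneg g -> 0 <= t -> cont_nonneg (fun s => g s t).
Proof.
  intros Hg ht x hx eps heps. destruct (Hg x t hx ht eps heps) as [d [hd H]].
  exists d; split; [lra|]. intros y hy h. apply H; auto.
  replace (t - t) with 0 by ring. rewrite Rabs_R0; lra.
Qed.

Lemma cpt_of f x : (forall eps, 0 < eps -> exists d, 0 < d /\
   forall y, Rabs (y - x) < d -> Rabs (f y - f x) < eps) -> continuity_pt f x.
Proof.
  intros H eps heps. destruct (H eps heps) as [d [hd Hd]].
  exists d; split; [lra|]. intros y [_ hy]. unfold R_dist in *. apply Hd; auto.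
Qed.
Lemma cont_of_continuity f : continuity f -> cont_nonneg f.
Proof.
  intros H x hx eps heps. destruct (H x eps heps) as [d [hd Hd]].
  exists d; split; [lra|]. intros y hy hyx.
  destruct (Req_dec y x) as [->|hne].
  - replace (f x - f x) with 0 by ring. rewrite Rabs_R0; lra.
  - apply (Hd y). split; [split; [exact I| auto] | exact hyx].
Qed.

Lemma cv_le_eventually u l c N : Un_cv u l -> (forall m, (N <= m)%nat -> u m <= c) -> l <= c.
Proof.
  intros Hu Hc. destruct (Rle_dec l c) as [|hn]; [auto|]. exfalso.
  destruct (Hu (l - c)) as [M HM]; [lra|].
  specialize (HM (max N M) ltac:(lia)). specialize (Hc (max N M) ltac:(lia)).
  unfold Rdist in HM. rabs_split; lra.
Qed.

Lemma sum_ge_term f M k : (forall n, 0 <= f n) -> (k <= M)%nat -> f k <= sum_f_R0 f M.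
Proof.
  intros Hf. induction M; intros hk.
  - assert (k = 0%nat) by lia. subst. simpl. lra.
  - rewrite tech5. destruct (Nat.eq_dec k (S M)) as [->|hne].
    + assert (0 <= sum_f_R0 f M) by (apply cond_pos_sum; auto). lra.
    + specialize (IHM ltac:(lia)). specialize (Hf (S M)). lra.
Qed.

Lemma geom_sum N : sum_f_R0 (fun n => (/2)^n) N = 2 - (/2)^N.
Proof.
  induction N; simpl; [lra|]. rewrite IHN. simpl. lra.
Qed.

Definition Psum (c : nat -> R) (M : nat) (r : R) :=
  sum_f_R0 (fun n => c n * Rmax 0 (r - INR n)) M.
Definition Nr (r : R) : nat := Z.to_nat (up r).
Definition rho (c : nat -> R) (r : R) := r + Psum c (Nr r) r.

Lemma Psum_stable c M k r : r <= INR M -> Psum c (M + k) r = Psum c M r.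
Proof.
  intros hr. induction k.
  - rewrite Nat.add_0_r; auto.
  - rewrite Nat.add_succ_r. unfold Psum in *. rewrite tech5, IHk.
    assert (INR M < INR (S (M + k))) by (apply lt_INR; lia).
    rewrite Rmax_left; [ring|lra].
Qed.

Lemma Psum_any c M M' r : r <= INR M -> r <= INR M' -> Psum c M r = Psum c M' r.
Proof.
  intros h1 h2. destruct (Nat.le_ge_cases M M') as [h|h].
  - replace M' with (M + (M' - M))%nat by lia. rewrite Psum_stable; auto.
  - replace M with (M' + (M - M'))%nat by lia. rewrite Psum_stable; auto.
Qed.

Lemma Nr_ge r : 0 <= r -> r <= INR (Nr r).
Proof.
  intros hr. unfold Nr. destruct (archimed r) as [h1 h2].
  assert (0 < up r)%Z by (apply lt_0_IZR; lra).
  rewrite INR_IZR_INZ, Z2Nat.id by lia. lra.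
Qed.

Lemma rho_eq c M r : 0 <= r -> r <= INR M -> rho c r = r + Psum c M r.
Proof.
  intros h1 h2. unfold rho. rewrite (Psum_any c (Nr r) M r); auto. apply Nr_ge; auto.
Qed.

Section R.
Variable c : nat -> R.
Hypothesis cpos : forall n, 0 <= c n.

Lemma Psum_mono M x y : x <= y -> Psum c M x <= Psum c M y.
Proof.
  intros h. unfold Psum. induction M; simpl.
  - apply Rmult_le_compat_l; [auto|]. rmm_split; lra.
  - apply Rplus_le_compat; [auto|]. apply Rmult_le_compat_l; [auto|]. rmm_split; lra.
Qed.

Lemma Psum_nonneg M x : 0 <= Psum c M x.
Proof.
  unfold Psum. apply cond_pos_sum. intros n. apply Rmult_le_pos; [auto|]. apply Rmax_l.
Qed.

Lemma Psum_lip M x y : Rabs (Psum c M y - Psum c M x) <= sum_f_R0 c M * Rabs (y - x).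
Proof.
  assert (Ht : forall n, Rabs (c n * Rmax 0 (y - INR n) - c n * Rmax 0 (x - INR n)) <= c n * Rabs (y - x)).
  { intros n. rewrite <- Rmult_minus_distr_l, Rabs_mult, (Rabs_right (c n)) by (specialize (cpos n); lra).
    apply Rmult_le_compat_l; [auto|].
    pose proof (lip_max 0 (y - INR n) 0 (x - INR n)).
    replace (y - INR n - (x - INR n)) with (y - x) in H by ring.
    replace (0 - 0) with 0 in H by ring. rewrite Rabs_R0 in H. lra. }
  unfold Psum. induction M.
  - simpl; apply Ht.
  - rewrite !tech5. pose proof (lip_plus (sum_f_R0 (fun n => c n * Rmax 0 (y - INR n)) M)
        (c (S M) * Rmax 0 (y - INR (S M)))
        (sum_f_R0 (fun n => c n * Rmax 0 (x - INR n)) M)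
        (c (S M) * Rmax 0 (x - INR (S M)))).
    specialize (Ht (S M)). rewrite Rmult_plus_distr_r. lra.
Qed.

Lemma rho_classK : classK (rho c).
Proof.
  split; [|split; [|split]].
  - intros x hx eps heps.
    set (M := Nr (x + 1)).
    assert (hM : x + 1 <= INR M) by (apply Nr_ge; lra).
    set (L := sum_f_R0 c M).
    assert (hL : 0 <= L) by (apply cond_pos_sum; auto).
    exists (Rmin 1 (eps / (L + 1))). split.
    { apply Rmin_pos; [lra|]. apply Rdiv_lt_0_compat; lra. }
    intros y hy hyx.
    assert (h1 : Rabs (y - x) < 1) by (rmm_split; lra).
    assert (h2 : Rabs (y - x) < eps / (L + 1)) by (rmm_split; lra).
    assert (y <= x + 1) by (rabs_split; lra).
    rewrite (rho_eq c M y), (rho_eq c M x) by lra.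
    pose proof (Psum_lip M x y). fold L in H0.
    pose proof (lip_plus y (Psum c M y) x (Psum c M x)).
    assert (L * Rabs (y - x) <= L * (eps / (L+1))) by (apply Rmult_le_compat_l; lra).
    assert ((1 + L) * (eps / (L+1)) = eps) by (field; lra).
    pose proof (Rabs_pos (y - x)). nra.
  - intros x hx. unfold rho. pose proof (Psum_nonneg (Nr x) x). lra.
  - intros x y hx hxy. set (M := Nr y).
    assert (INR M >= y) by (apply Rle_ge, Nr_ge; lra).
    rewrite (rho_eq c M y), (rho_eq c M x) by lra.
    pose proof (Psum_mono M x y). lra.
  - unfold rho. unfold Psum. rewrite sum_eq_R0; [ring|].
    intros n _. rewrite Rmax_left; [ring|]. pose proof (pos_INR n). lra.
Qed.

Lemma rho_ge m : c m <= rho c (INR (S m)).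
Proof.
  assert (h0 : 0 <= INR (S m)) by apply pos_INR.
  rewrite (rho_eq c (S m)) by lra.
  assert (H : (fun n => c n * Rmax 0 (INR (S m) - INR n)) m <= Psum c (S m) (INR (S m))).
  { unfold Psum. apply (sum_ge_term (fun n => c n * Rmax 0 (INR (S m) - INR n))); [|lia]. intros n. apply Rmult_le_pos; [auto|apply Rmax_l]. }
  cbv beta in H. rewrite S_INR in *.
  replace (INR m + 1 - INR m) with 1 in H by ring.
  rewrite Rmax_right in H by lra. lra.
Qed.
End R.

Lemma geomK K n : 0 <= K -> sum_f_R0 (fun k => Rabs (K * (/2)^k)) n = K * (2 - (/2)^n).
Proof.
  intros hK. induction n.
  - simpl. rewrite Rabs_right; lra.
  - rewrite tech5, IHn. rewrite Rabs_right.
    + simpl. field.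
    + apply Rle_ge, Rmult_le_pos; [lra|]. apply pow_le; lra.
Qed.

Section G.
Variable beta : R -> R -> R.
Hypothesis HB : classKL beta.
Variable rh : R -> R.
Hypothesis Hrh : classK rh.
Variable c : nat -> R.
Hypothesis Hc : forall m, 0 <= c m /\ forall t, c m <= t -> beta (INR m + 2) t < (/2)^(S m).
Hypothesis Hrc : forall m, c m <= rh (INR (S m)).

Definition K := beta 1 0 + 2.
Definition g n y := beta (INR n + 1) (Rmax y 1 * (1 + rh (INR n))).

Lemma rh_nn n : 0 <= rh (INR n).
Proof. destruct Hrh as [_ [H _]]. apply H, pos_INR. Qed.

Lemma arg_nn n y : 0 <= Rmax y 1 * (1 + rh (INR n)).
Proof. pose proof (rh_nn n). pose proof (Rmax_r y 1). apply Rmult_le_pos; lra. Qed.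

Lemma g_nn n y : 0 <= g n y.
Proof.
  destruct HB as [_ [H _]]. apply H; [pose proof (pos_INR n); lra| apply arg_nn].
Qed.

Lemma K_ge : 2 <= K.
Proof. destruct HB as [_ [H _]]. unfold K. pose proof (H 1 0). lra. Qed.

Lemma g_bound n y : g n y <= K * (/2)^n.
Proof.
  destruct HB as [_ [Hn [_ Hd]]]. unfold g. destruct n.
  - simpl (INR 0). rewrite Rplus_0_l.
    destruct (Hd 1 ltac:(lra)) as [Hm _].
    pose proof (Hm 0 _ ltac:(lra) (arg_nn 0 y)). simpl in H |- *. unfold K. lra.
  - destruct (Hc n) as [_ Hcn].
    assert (c n <= Rmax y 1 * (1 + rh (INR (S n)))).
    { pose proof (Hrc n). pose proof (rh_nn (S n)). pose proof (Rmax_r y 1).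
      assert (1 + rh (INR (S n)) <= Rmax y 1 * (1 + rh (INR (S n)))) by nra. lra. }
    specialize (Hcn _ H). replace (INR (S n) + 1) with (INR n + 2) by (rewrite S_INR; ring).
    assert (0 <= (/2)^(S n)) by (apply pow_le; lra).
    pose proof K_ge. set (p := (/2)^(S n)) in *.
    assert (0 <= (K - 1) * p) by (apply Rmult_le_pos; lra).
    assert (K * p = (K - 1) * p + p) by ring. lra.
Qed.

Lemma g_mono n y1 y2 : y1 <= y2 -> g n y2 <= g n y1.
Proof.
  intros h. destruct HB as [_ [_ [_ Hd]]]. unfold g.
  destruct (Hd (INR n + 1)) as [Hm _]; [pose proof (pos_INR n); lra|].
  apply Hm; [apply arg_nn|]. pose proof (rh_nn n).
  apply Rmult_le_compat_r; [lra|]. rmm_split; lra.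
Qed.

Lemma g_dec n e : 0 < e -> exists T, forall y, T <= y -> g n y < e.
Proof.
  intros he. destruct HB as [_ [_ [_ Hd]]].
  destruct (Hd (INR n + 1)) as [_ H]; [pose proof (pos_INR n); lra|].
  destruct (H e he) as [T [hT HT]]. exists T. intros y hy. apply HT.
  pose proof (rh_nn n). pose proof (Rmax_l y 1). pose proof (Rmax_r y 1).
  assert (Rmax y 1 <= Rmax y 1 * (1 + rh (INR n))) by nra. lra.
Qed.

Lemma g_cont n y : continuity_pt (g n) y.
Proof.
  destruct HB as [Hc2 _]. apply cpt_of. intros eps heps.
  set (b := 1 + rh (INR n)). assert (hb : 1 <= b) by (pose proof (rh_nn n); unfold b; lra).
  assert (ha : 0 <= INR n + 1) by (pose proof (pos_INR n); lra).
  destruct (Hc2 (INR n + 1) (Rmax y 1 * b) ha (arg_nn n y) eps heps) as [d [hd Hd]].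
  exists (d / b). split; [apply Rdiv_lt_0_compat; lra|].
  intros z hz. unfold g. fold b. apply Hd; [lra|apply arg_nn|..].
  - replace (INR n + 1 - (INR n + 1)) with 0 by ring. rewrite Rabs_R0; lra.
  - rewrite <- Rmult_minus_distr_r, Rabs_mult, (Rabs_right b) by lra.
    pose proof (lip_max z 1 y 1). replace (1 - 1) with 0 in H by ring. rewrite Rabs_R0 in H.
    assert (Rabs (z - y) * b < d) by (apply (Rmult_lt_compat_r b) in hz; [|lra]; field_simplify in hz; lra).
    nra.
Qed.

Lemma g_CVN : CVN_R g.
Proof.
  intros r. exists (fun n => K * (/2)^n). exists (2 * K). split.
  - intros eps heps. pose proof K_ge.
    destruct (pow_lt_1_zero (/2) ltac:(rewrite Rabs_right; lra) (eps / K)) as [N HN].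
    { apply Rdiv_lt_0_compat; lra. }
    exists N. intros n hn. unfold Rdist. rewrite geomK by lra.
    specialize (HN n hn). rewrite Rabs_right in HN by (apply Rle_ge, pow_le; lra).
    replace (K * (2 - (/2)^n) - 2 * K) with (- (K * (/2)^n)) by ring.
    rewrite Rabs_Ropp, Rabs_right by (apply Rle_ge, Rmult_le_pos; [lra|apply pow_le; lra]).
    apply (Rmult_lt_compat_l K) in HN; [|lra]. field_simplify in HN; lra.
  - intros n y _. rewrite Rabs_right by (apply Rle_ge, g_nn). apply g_bound.
Qed.

Definition cvg := CVN_R_CVS g g_CVN.
Definition Phi := SFL g cvg.

Lemma Phi_cv y : Un_cv (fun N => SP g N y) (Phi y).
Proof. unfold Phi, SFL. destruct (cvg y). auto. Qed.

Lemma Phi_cont : cont_nonneg Phi.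
Proof.
  apply cont_of_continuity. apply SFL_continuity; [apply g_CVN|].
  intros n y. apply g_cont.
Qed.

Lemma Phi_ge n y : g n y <= Phi y.
Proof.
  apply Rle_trans with (SP g n y).
  - unfold SP. apply (sum_ge_term (fun k => g k y)); [intros; apply g_nn|lia].
  - apply growing_ineq; [|apply Phi_cv]. intros m. unfold SP. rewrite tech5.
    pose proof (g_nn (S m) y). lra.
Qed.

Lemma Phi_nn y : 0 <= Phi y.
Proof. pose proof (Phi_ge 0 y). pose proof (g_nn 0 y). lra. Qed.

Lemma Phi_mono y1 y2 : y1 <= y2 -> Phi y2 <= Phi y1.
Proof.
  intros h. apply Rle_cv_lim with (Un := fun N => SP g N y2) (Vn := fun N => SP g N y1); try apply Phi_cv.
  intros n. unfold SP. apply sum_Rle. intros; apply g_mono; auto.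
Qed.

Lemma SP_dec N e : 0 < e -> exists T, forall y, T <= y -> SP g N y < e.
Proof.
  revert e. induction N; intros e he.
  - destruct (g_dec 0 e he) as [T HT]. exists T. intros y hy. unfold SP. simpl. auto.
  - destruct (IHN (e/2)) as [T1 H1]; [lra|]. destruct (g_dec (S N) (e/2)) as [T2 H2]; [lra|].
    exists (Rmax T1 T2). intros y hy. unfold SP in *. rewrite tech5.
    specialize (H1 y ltac:(rmm_split; lra)). specialize (H2 y ltac:(rmm_split; lra)). lra.
Qed.

Lemma SP_tail N k y : SP g (N + k) y <= SP g N y + K * ((/2)^N - (/2)^(N + k)).
Proof.
  induction k.
  - rewrite Nat.add_0_r. lra.
  - rewrite Nat.add_succ_r. unfold SP in *. rewrite tech5.
    pose proof (g_bound (S (N + k)) y).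
    assert (K * ((/2)^N - (/2)^(N+k)) + K * (/2)^(S (N+k)) = K * ((/2)^N - (/2)^(S (N+k)))).
    { simpl. field. }
    lra.
Qed.

Lemma Phi_dec e : 0 < e -> exists T, forall y, T <= y -> Phi y < e.
Proof.
  intros he. pose proof K_ge.
  destruct (pow_lt_1_zero (/2) ltac:(rewrite Rabs_right; lra) (e / (2 * K))) as [N HN].
  { apply Rdiv_lt_0_compat; lra. }
  specialize (HN N (le_n N)). rewrite Rabs_right in HN by (apply Rle_ge, pow_le; lra).
  assert (hK : K * (/2)^N < e / 2).
  { apply (Rmult_lt_compat_l K) in HN; [|lra]. replace (K * (e / (2 * K))) with (e/2) in HN by (field; lra). lra. }
  destruct (SP_dec N (e/2)) as [T HT]; [lra|].
  exists T. intros y hy.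
  assert (Phi y <= SP g N y + K * (/2)^N).
  { apply (cv_le_eventually _ _ _ N (Phi_cv y)). intros m hm.
    replace m with (N + (m - N))%nat by lia. pose proof (SP_tail N (m - N) y).
    assert (0 <= K * (/2)^(N + (m - N))) by (apply Rmult_le_pos; [lra|apply pow_le; lra]).
    lra. }
  specialize (HT y hy). lra.
Qed.
End G.

Theorem lemmaA1 (sigma : R -> R) (beta : R -> R -> R) :
  classK sigma -> classKL beta ->
  exists (rho_hat : R -> R) (beta_hat : R -> R -> R),
    classK rho_hat /\ classKL beta_hat /\
    forall t r s, 0 <= t -> 0 <= r -> 0 <= s ->
      Rmin (sigma s) (beta r t) <= beta_hat s (t / (1 + rho_hat r)).
Proof.
  intros HS HB.
  assert (Hc0 : forall m : nat, exists T, 0 <= T /\ forall t, T <= t -> beta (INR m + 2) t < (/2)^(S m)).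
  { intros m. destruct HB as [_ [_ [_ Hd]]].
    destruct (Hd (INR m + 2)) as [_ H]; [pose proof (pos_INR m); lra|].
    apply H. apply pow_lt; lra. }
  destruct (functional_choice _ Hc0) as [c Hc].
  assert (cpos : forall n, 0 <= c n) by (intros n; apply (Hc n)).
  pose proof (rho_classK c cpos) as Hrh.
  pose proof (rho_ge c cpos) as Hrc.
  set (rh := rho c) in *.
  set (Ph := Phi beta HB rh Hrh c Hc Hrc).
  pose proof (Phi_cont beta HB rh Hrh c Hc Hrc) as PC. fold Ph in PC.
  pose proof (Phi_ge beta HB rh Hrh c Hc Hrc) as PG. fold Ph in PG.
  pose proof (Phi_nn beta HB rh Hrh c Hc Hrc) as PN. fold Ph in PN.
  pose proof (Phi_mono beta HB rh Hrh c Hc Hrc) as PM. fold Ph in PM.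
  pose proof (Phi_dec beta HB rh Hrh c Hc Hrc) as PD. fold Ph in PD.
  clearbody Ph.
  destruct HS as [Sc [Sn [Ss S0]]].
  destruct HB as [Bc [Bn [BK Bd]]].
  exists rh, (fun s t => beta s t + Rmax 0 (sigma s - Rmax 0 (t - 1)) + Rmin (sigma s) (Ph t)).
  split; [exact Hrh|]. split.
  -
    assert (Hc2 : cont2_nonneg (fun s t => beta s t + Rmax 0 (sigma s - Rmax 0 (t - 1)) + Rmin (sigma s) (Ph t))).
    { apply (c2_op Rplus (fun s t => beta s t + Rmax 0 (sigma s - Rmax 0 (t - 1))) (fun s t => Rmin (sigma s) (Ph t))).
      - apply lip_plus.
      - apply (c2_op Rplus beta (fun s t => Rmax 0 (sigma s - Rmax 0 (t - 1)))); [apply lip_plus|exact Bc|].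
        apply (c2_op Rmax (fun s t => 0) (fun s t => sigma s - Rmax 0 (t - 1))); [apply lip_max|apply c2_const|].
        apply (c2_op Rminus (fun s t => sigma s) (fun s t => Rmax 0 (t - 1))); [apply lip_minus|apply c2_fst; auto|].
        apply (c2_snd (fun t => Rmax 0 (t - 1))). apply cont_lip. intros x y.
        pose proof (lip_max 0 (y - 1) 0 (x - 1)). replace (0 - 0) with 0 in H by ring.
        rewrite Rabs_R0 in H. replace (y - 1 - (x - 1)) with (y - x) in H by ring. lra.
      - apply (c2_op Rmin (fun s t => sigma s) (fun s t => Ph t)); [apply lip_min|apply c2_fst; auto|apply c2_snd; auto]. }
    split; [exact Hc2|]. split; [|split].
    + intros s t hs ht. pose proof (Bn s t hs ht). pose proof (Sn s hs). pose proof (PN t).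
      pose proof (Rmax_l 0 (sigma s - Rmax 0 (t - 1))).
      assert (0 <= Rmin (sigma s) (Ph t)) by (rmm_split; lra). lra.
    + intros t ht. destruct (BK t ht) as [_ [_ [Bs B0]]]. split; [|split; [|split]].
      * exact (c2_first _ t Hc2 ht).
      * intros s hs. pose proof (Bn s t hs ht). pose proof (Sn s hs). pose proof (PN t).
        pose proof (Rmax_l 0 (sigma s - Rmax 0 (t - 1))).
        assert (0 <= Rmin (sigma s) (Ph t)) by (rmm_split; lra). lra.
      * intros x y hx hxy. pose proof (Bs x y hx hxy). pose proof (Ss x y hx hxy).
        assert (Rmax 0 (sigma x - Rmax 0 (t - 1)) <= Rmax 0 (sigma y - Rmax 0 (t - 1))) by (rmm_split; lra).
        assert (Rmin (sigma x) (Ph t) <= Rmin (sigma y) (Ph t)) by (rmm_split; lra). lra.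
      * cbv beta. rewrite B0, S0. pose proof (PN t).
        rewrite (Rmin_left 0) by lra. rewrite Rmax_left; [ring|]. rmm_split; lra.
    + intros s hs. destruct (Bd s hs) as [Bm Bdec]. split.
      * intros t1 t2 h1 h12. pose proof (Bm t1 t2 h1 h12). pose proof (PM t1 t2 h12).
        assert (Rmax 0 (sigma s - Rmax 0 (t2 - 1)) <= Rmax 0 (sigma s - Rmax 0 (t1 - 1))) by (rmm_split; lra).
        assert (Rmin (sigma s) (Ph t2) <= Rmin (sigma s) (Ph t1)) by (rmm_split; lra). lra.
      * intros eps heps.
        destruct (Bdec (eps/2)) as [T1 [hT1 H1]]; [lra|].
        destruct (PD (eps/2)) as [T2 H2]; [lra|].
        exists (Rmax (Rmax T1 T2) (1 + sigma s)). split; [rmm_split; lra|].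
        intros t ht.
        assert (T1 <= t /\ T2 <= t /\ 1 + sigma s <= t) as [? [? ?]] by (rmm_split; lra).
        specialize (H1 t ltac:(lra)). specialize (H2 t ltac:(lra)).
        assert (Rmax 0 (sigma s - Rmax 0 (t - 1)) = 0) by (rmm_split; lra).
        assert (Rmin (sigma s) (Ph t) <= Ph t) by (rmm_split; lra). lra.
  - intros t r s ht hr hs.
    destruct Hrh as [_ [Rn [Rs R0]]].
    pose proof (Rn r hr) as hrr.
    set (tau := t / (1 + rh r)).
    assert (htau : 0 <= tau) by (unfold tau; apply Rmult_le_pos; [lra|]; left; apply Rinv_0_lt_compat; lra).
    assert (ht_eq : t = tau * (1 + rh r)) by (unfold tau; field; lra).
    pose proof (Bn s tau hs htau). pose proof (Sn s hs). pose proof (PN tau).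
    pose proof (Rmax_l 0 (sigma s - Rmax 0 (tau - 1))).
    assert (0 <= Rmin (sigma s) (Ph tau)) by (rmm_split; lra).
    destruct (Rle_dec tau 1) as [hle|hgt].
    + assert (Rmax 0 (sigma s - Rmax 0 (tau - 1)) = sigma s) by (rmm_split; lra).
      assert (Rmin (sigma s) (beta r t) <= sigma s) by apply Rmin_l. lra.
    +
      assert (Hn : exists n : nat, INR n <= r <= INR n + 1).
      { exists (Nat.pred (Nr r)). pose proof (Nr_ge r hr).
        destruct (Nr r) as [|k] eqn:E.
        - simpl in *. lra.
        - simpl Nat.pred. rewrite S_INR in H4.
          destruct (Rle_dec (INR k) r) as [|hk]; [lra|].
          exfalso. unfold Nr in E. destruct (archimed r) as [a1 a2].
          assert (0 < up r)%Z by (apply lt_0_IZR; lra).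
          assert (INR (Z.to_nat (up r)) = IZR (up r)) by (rewrite INR_IZR_INZ, Z2Nat.id by lia; auto).
          rewrite E, S_INR in H6. lra. }
      destruct Hn as [n [hn1 hn2]].
      assert (Hbt : beta r t <= Ph tau).
      { apply Rle_trans with (beta (INR n + 1) t).
        - destruct (Rle_lt_or_eq_dec _ _ hn2) as [hl|he]; [|rewrite he; lra].
          destruct (BK t ht) as [_ [_ [Bs _]]]. left. apply Bs; auto.
        - apply Rle_trans with (g beta rh n tau); [|apply PG].
          unfold g. rewrite Rmax_left by lra.
          destruct (Bd (INR n + 1)) as [Bm _]; [pose proof (pos_INR n); lra|].
          apply Bm.
          + pose proof (Rn (INR n) (pos_INR n)). apply Rmult_le_pos; lra.
          + rewrite ht_eq. apply Rmult_le_compat_l; [lra|].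
            assert (rh (INR n) <= rh r).
            { destruct (Rle_lt_or_eq_dec _ _ hn1) as [hl|he]; [left; apply Rs; auto; apply pos_INR|rewrite he; lra]. }
            lra. }
      assert (Rmin (sigma s) (beta r t) <= Rmin (sigma s) (Ph tau)) by (rmm_split; lra). lra.
Qed.
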